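(* In a finite ELP, let $\pi$ be a policy, let $Q_{\max}$ be an optimal solution of the problem: maximize $\mathbb E_\pi[Q(S_T,A_T)]$ over $Q\in\mathcal Q$ subject to $Q\le\mathcal BQ$ pointwise, and let $\mu$ be a $Q_{\max}$-greedy policy. Let $(s,a)\in\mathcal S\times\mathcal A$ and define $N(s,a)=\{(s',a'):s'\notin\mathcal S_\bot,\ P(s'|s,a)\mu(a'|s')>0\}$. If $Q_{\max}(s,a)=Q^*(s,a)$, then for every $(s',a')\in N(s,a)$: $Q_{\max}(s',a')=Q^*(s',a')$ and $\max_{\bar a}Q_{\max}(s',\bar a)=\max_{\bar a}Q^*(s',\bar a)$.
   Context: A finite ELP is $(\mathcal S,\mathcal A,P,R,\rho)$ with finite $\mathcal S,\mathcal A$, reward $R:\mathcal S\to\mathbb R$, transitions $P(s'|s,a)$, distribution $\rho$, and nonempty terminal set $\mathcal S_\bot$. Under a policy $\pi$, $S_0$ is a fixed terminal state, $A_t\sim\pi(\cdot|S_t)$, $S_{t+1}\sim P(\cdot|S_t,A_t)$, and $T=\inf\{t\ge1:S_t\in\mathcal S_\bot\}$. ELP conditions: $\mathbb E_\pi[T]<\infty$ for every $\pi$; $P(s'|s,a)=\rho(s')$ for all $s\in\mathcal S_\bot$, all $a,s'$; every state is reachable under some policy. $\mathcal Q$ = all functions $\mathcal S\times\mathcal A\to\mathbb R$. $\mathcal BQ(s,a)=\sum_{s'}P(s'|s,a)\big(R(s')+\mathbf 1[s'\notin\mathcal S_\bot]\max_{a'}Q(s',a')\big)$, with unique fixed point $Q^*$.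 A $Q$-greedy policy is one with $\mu(a|s)>0$ only if $Q(s,a)=\max_{\bar a}Q(s,\bar a)$. *)

(* Defs.v *)
From HB Require Import structures.
From mathcomp Require Import all_boot all_order all_algebra.
From mathcomp Require Import all_classical all_reals all_analysis.
Set Implicit Arguments. Unset Strict Implicit. Unset Printing Implicit Defensive.
Import Order.TTheory GRing.Theory Num.Theory numFieldNormedType.Exports.
Local Open Scope ring_scope.

Section ELPDefs.
Variables (R : realType) (S A : finType).

Record elp := ELP {
  P : S -> A -> S -> R;        (* P s a s' = P(s'|s,a) *)
  rew : S -> R;
  rho : S -> R;                (* restart distribution *)
  Sbot : {set S};              (* terminal states *)
  s0 : S                       (* fixed terminal initial state S_0 *)
}.

Variable M : elp.

(* Stochastic policies: pi s a = pi(a|s). *)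
Definition is_policy (pi : S -> A -> R) : Prop :=
  (forall s a, 0 <= pi s a) /\ (forall s, \sum_(a : A) pi s a = 1).

(* alive pi n s = Pr_pi(S_{n+1} = s, T >= n+1)   (time t = n+1 >= 1). *)
Fixpoint alive (pi : S -> A -> R) (n : nat) (s' : S) : R :=
  match n with
  | 0 => \sum_(a : A) pi (s0 M) a * P M (s0 M) a s'
  | n.+1 => \sum_(s : S | s \notin Sbot M)
              alive pi n s * \sum_(a : A) pi s a * P M s a s'
  end.

(* occ pi t s = Pr_pi(S_t = s) for the (non-stopped) process. *)
Fixpoint occ (pi : S -> A -> R) (t : nat) (s' : S) : R :=
  match t with
  | 0 => (s' == s0 M)%:R
  | t.+1 => \sum_(s : S) occ pi t s * \sum_(a : A) pi s a * P M s a s'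
  end.

(* E_pi[T] = sum_{t>=1} Pr(T >= t); E_pi[T] < oo iff this series converges. *)
Definition ET_finite (pi : S -> A -> R) : Prop :=
  cvgn (series (fun n => \sum_(s : S) alive pi n s)).

Definition is_ELP : Prop :=
  [/\ (forall s a, (forall s', 0 <= P M s a s') /\ \sum_(s' : S) P M s a s' = 1),
      ((forall s, 0 <= rho M s) /\ \sum_(s : S) rho M s = 1),
      (Sbot M != finset.set0 /\ s0 M \in Sbot M),
      (forall pi, is_policy pi -> ET_finite pi) &
      ((forall s a s', s \in Sbot M -> P M s a s' = rho M s') /\
       (forall s, exists pi, is_policy pi /\ exists t, 0 < occ pi t s))].

(* max_a Q(s,a) (A is nonempty in any ELP since policies exist). *)
Definition Vmax (Q : S -> A -> R) (s : S) : R :=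
  match [pick a : A] with
  | Some a0 => \big[Num.max/Q s a0]_(a : A) Q s a
  | None => 0
  end.

Definition bellman (Q : S -> A -> R) (s : S) (a : A) : R :=
  \sum_(s' : S) P M s a s' *
     (rew M s' + (s' \notin Sbot M)%:R * Vmax Q s').

(* E_pi[Q(S_T, A_T)] = sum_{t>=1} sum_{s in Sbot} Pr(T=t, S_t=s) sum_a pi(a|s) Q(s,a). *)
Definition ExpQT (pi : S -> A -> R) (Q : S -> A -> R) : R :=
  limn (series (fun n => \sum_(s in Sbot M) alive pi n s *
                           \sum_(a : A) pi s a * Q s a)).

Definition feasible (Q : S -> A -> R) : Prop :=
  forall s a, Q s a <= bellman Q s a.

Definition LP_optimal (pi : S -> A -> R) (Q : S -> A -> R) : Prop :=
  feasible Q /\ forall Q', feasible Q' -> ExpQT pi Q' <= ExpQT pi Q.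

Definition greedy (Q : S -> A -> R) (mu : S -> A -> R) : Prop :=
  is_policy mu /\ forall s a, 0 < mu s a -> Q s a = Vmax Q s.

Definition Nset (mu : S -> A -> R) (s : S) (a : A) (s' : S) (a' : A) : Prop :=
  s' \notin Sbot M /\ 0 < P M s a s' * mu s' a'.

End ELPDefs.

(* Main.v *)
Require Import Defs.
From HB Require Import structures.
From mathcomp Require Import all_boot all_order all_algebra.
From mathcomp Require Import all_classical all_reals all_analysis.
From mathcomp Require Import ring lra.
Import Order.TTheory GRing.Theory Num.Theory numFieldNormedType.Exports.
Local Open Scope ring_scope.

Section Aux.
Variable R : realType.

Lemma bmax_ge (T : finType) (f : T -> R) x0 y : f y <= \big[Num.max/f x0]_i f i.
Proof. exact: le_bigmax. Qed.

Lemma bmax_ex (T : finType) (f : T -> R) x0 : exists i, \big[Num.max/f x0]_i f i = f i.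
Proof.
apply: (big_ind (fun x => exists i, x = f i)); first by exists x0.
move=> x y [i ->] [j ->].
  by case: (leP (f i) (f j)) => h; [exists j|exists i].
by move=> i _; exists i.
Qed.

Lemma sum_pos (T : finType) (p : pred T) (F : T -> R) :
  0 < \sum_(i | p i) F i -> exists i, p i /\ 0 < F i.
Proof.
move=> h; case: (pselect (exists i, p i /\ 0 < F i)) => // hn.
have : \sum_(i | p i) F i <= 0.
  apply: sumr_le0 => i pi; rewrite leNgt; apply/negP => fi.
  by apply: hn; exists i.
by rewrite leNgt h.
Qed.

Lemma mul_pos (x y : R) : 0 <= x -> 0 <= y -> 0 < x * y -> 0 < x /\ 0 < y.
Proof.
rewrite !lt0r => hx hy /andP[hxy _]; rewrite hx hy !andbT; split.
  by apply: contraNneq hxy => ->; rewrite mul0r.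
by apply: contraNneq hxy => ->; rewrite mulr0.
Qed.

Lemma term_le_sum (T : finType) (p : pred T) (F : T -> R) j :
  p j -> (forall i, p i -> 0 <= F i) -> F j <= \sum_(i | p i) F i.
Proof.
move=> pj h; rewrite (bigD1 j) //= lerDl; apply: sumr_ge0 => i /andP[pi _].
exact: h.
Qed.

Lemma sub_sum_le (T : finType) (p q : pred T) (F : T -> R) :
  (forall i, p i -> q i) -> (forall i, q i -> 0 <= F i) ->
  \sum_(i | p i) F i <= \sum_(i | q i) F i.
Proof.
move=> pq h; rewrite [X in _ <= X](bigID p) /=.
have -> : \sum_(i | q i && p i) F i = \sum_(i | p i) F i.
  by apply: eq_bigl => i; case pi: (p i); rewrite ?andbT ?andbF // pq.
rewrite lerDl; apply: sumr_ge0 => i /andP[qi _]; exact: h.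
Qed.

Lemma seq_contra (u : nat -> R) (a : R) N : 0 < a ->
  (forall n, (N <= n)%N -> a <= u n) -> cvgn (series u) -> False.
Proof.
move=> a0 Hu /cvg_series_cvg_0 H.
have := cvgr_dist_lt _ _ H _ a0.
case=> N0 _ HN.
have := HN (maxn N N0) (leq_maxr _ _).
rewrite /= sub0r normrN.
have := Hu (maxn N N0) (leq_maxl _ _).
move=> h1 h2.
have : u (maxn N N0) < a by apply: le_lt_trans h2; exact: ler_norm.
by rewrite ltNge h1.
Qed.
End Aux.
Arguments term_le_sum {R T p F} j.
Arguments bmax_ex {R T} f x0.
Arguments bmax_ge {R T} f x0 y.
Arguments mul_pos {R x y}.
Arguments sum_pos {R T p F}.
Arguments sub_sum_le {R T p q F}.
Arguments seq_contra {R u a} N.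

Section ELP.
Variables (R : realType) (S A : finType) (M : elp R S A).
Hypothesis HP0 : forall s a s', 0 <= P M s a s'.
Hypothesis HP1 : forall s a, \sum_s' P M s a s' = 1.

Lemma Vmax_ge (a0 : A) (Q : S -> A -> R) s a : Q s a <= Vmax Q s.
Proof.
rewrite /Vmax; case: pickP => [b _|/(_ a0)//]; exact: bmax_ge.
Qed.

Lemma Vmax_ex (a0 : A) (Q : S -> A -> R) s : exists a, Vmax Q s == Q s a.
Proof.
rewrite /Vmax; case: pickP => [b _|/(_ a0)//].
by have [i ->] := bmax_ex (Q s) b; exists i.
Qed.

Lemma occ_ge0 pi : is_policy pi -> forall t s, 0 <= occ M pi t s.
Proof.
move=> [hp _]; elim=> [|t IH] s /=; first exact: ler0n.
apply: sumr_ge0 => x _; apply: mulr_ge0 => //; apply: sumr_ge0 => a _.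
exact: mulr_ge0.
Qed.

Lemma alive_ge0 pi : is_policy pi -> forall n s, 0 <= alive M pi n s.
Proof.
move=> [hp _]; elim=> [|t IH] s /=.
  by apply: sumr_ge0 => a _; exact: mulr_ge0.
apply: sumr_ge0 => x _; apply: mulr_ge0 => //; apply: sumr_ge0 => a _.
exact: mulr_ge0.
Qed.

Lemma occ_step pi t s a s' : is_policy pi -> 0 < occ M pi t s -> 0 < pi s a ->
  0 < P M s a s' -> 0 < occ M pi t.+1 s'.
Proof.
move=> hpi h1 h2 h3 /=.
have [hp _] := hpi.
apply: lt_le_trans (term_le_sum s _ _); last first.
- move=> x _; apply: mulr_ge0; first exact: occ_ge0.
  by apply: sumr_ge0 => b _; exact: mulr_ge0.
- by [].
apply: mulr_gt0 => //.
apply: lt_le_trans (term_le_sum a _ _) => //.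
  exact: mulr_gt0.
by move=> b _; exact: mulr_ge0.
Qed.

Lemma alive_step pi n s a s' : is_policy pi -> s \notin Sbot M ->
  0 < alive M pi n s -> 0 < pi s a ->
  0 < P M s a s' -> 0 < alive M pi n.+1 s'.
Proof.
move=> hpi hs h1 h2 h3 /=.
have [hp _] := hpi.
apply: lt_le_trans ((@term_le_sum _ _ (fun x => x \notin Sbot M) _ s _ _)); last first.
- move=> x _; apply: mulr_ge0; first exact: alive_ge0.
  by apply: sumr_ge0 => b _; exact: mulr_ge0.
- by [].
apply: mulr_gt0 => //.
apply: lt_le_trans (term_le_sum a _ _) => //.
  exact: mulr_gt0.
by move=> b _; exact: mulr_ge0.
Qed.

Lemma occ_dec pi t s' : is_policy pi -> 0 < occ M pi t.+1 s' ->
  exists s a, [/\ 0 < occ M pi t s, 0 < pi s a & 0 < P M s a s'].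
Proof.
move=> hpi /= /sum_pos [s [_ h]].
have [hp _] := hpi.
have hs : 0 <= \sum_a pi s a * P M s a s'.
  by apply: sumr_ge0 => b _; exact: mulr_ge0.
have [h1 /sum_pos [a [_ h2]]] := mul_pos (occ_ge0 pi hpi t s) hs h.
have [h3 h4] := mul_pos (hp s a) (HP0 s a s') h2.
by exists s, a.
Qed.


Lemma key_ineq (Q Qs : S -> A -> R) (g : S -> A) :
  feasible M Q -> (forall s1 a1, bellman M Qs s1 a1 = Qs s1 a1) ->
  (forall s, Vmax Q s = Q s (g s)) -> (forall s a, Qs s a <= Vmax Qs s) ->
  forall s a, Q s a - Qs s a <=
    \sum_s' P M s a s' * ((s' \notin Sbot M)%:R * (Q s' (g s') - Qs s' (g s'))).
Proof.
move=> hf hfix hg hQs s a.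
apply: le_trans (_ : bellman M Q s a - bellman M Qs s a <= _).
  by rewrite hfix; have := hf s a; lra.
rewrite /bellman -sumrB; apply: ler_sum => s' _.
rewrite -mulrBr; apply: ler_wpM2l => //.
have hb : 0 <= (s' \notin Sbot M)%:R :> R by exact: ler0n.
have : (s' \notin Sbot M)%:R * (Vmax Q s' - Vmax Qs s') <=
   (s' \notin Sbot M)%:R * (Q s' (g s') - Qs s' (g s')).
  apply: ler_wpM2l => //.
  rewrite hg; have := hQs s' (g s'); lra.
rewrite !mulrBr; lra.
Qed.

Lemma feasible_le (a0 : A) (H : is_ELP M) (Q Qs : S -> A -> R) :
  feasible M Q -> (forall s1 a1, bellman M Qs s1 a1 = Qs s1 a1) ->
  forall s a, Q s a <= Qs s a.
Proof.
move=> hf hfix s a.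
have [_ _ [_ hs0] hET [hterm hreach]] := H.
pose g s := xchoose (Vmax_ex a0 Q s).
have hg : forall s, Vmax Q s = Q s (g s).
  by move=> x; apply/eqP; exact: (xchooseP (Vmax_ex a0 Q x)).
have hQs : forall s a, Qs s a <= Vmax Qs s by move=> x b; exact: Vmax_ge.
have key := key_ineq _ _ _ hf hfix hg hQs.
pose d s := Q s (g s) - Qs s (g s).
have [sm hsm] := bmax_ex d s.
have dle : forall x, d x <= d sm by move=> x; rewrite -hsm; exact: bmax_ge.
suff dm : d sm <= 0.
  have := key s a; move=> h; rewrite -subr_le0; apply: le_trans h _.
  apply: sumr_le0 => x _; apply: mulr_ge0_le0 => //.
  apply: mulr_ge0_le0; first exact: ler0n.
  exact: le_trans (dle x) dm.
rewrite leNgt; apply/negP => mpos.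
pose m := d sm.
pose inC x := d x == m.
have closed : forall x x', inC x -> 0 < P M x (g x) x' -> x' \notin Sbot M /\ inC x'.
  move=> x x' hx hP.
  pose e y := (y \notin Sbot M)%:R * d y.
  have ele : forall y, e y <= m.
    move=> y; rewrite /e; case: (y \notin Sbot M); rewrite ?mul1r ?mul0r.
      exact: dle.
    exact: ltW.
  case: (pselect (x' \notin Sbot M /\ inC x')) => // hn; exfalso.
  have elt : e x' < m.
    rewrite /e; move: hn; case: (x' \notin Sbot M) => /=; rewrite ?mul1r ?mul0r //.
    move=> hn; rewrite lt_neqAle dle andbT; apply/negP => /eqP h; apply: hn; split=> //.
    by rewrite /inC h.
  have h1 : \sum_y P M x (g x) y * (m - e y) <= 0.
    have hk : m <= \sum_y P M x (g x) y * e y.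
      by rewrite /e -(eqP hx); exact: key x (g x).
    under eq_bigr do rewrite mulrBr.
    rewrite sumrB -mulr_suml HP1 mul1r.
    lra.
  have h2 : 0 < \sum_y P M x (g x) y * (m - e y).
    apply: lt_le_trans (term_le_sum x' _ _) => //.
      by apply: mulr_gt0 => //; rewrite subr_gt0.
    by move=> y _; apply: mulr_ge0 => //; rewrite subr_ge0.
  by move: h2; rewrite ltNge h1.
have [pi0 [hpi0 [t0 ht0]]] := hreach sm.
pose mu x b := if inC x then (b == g x)%:R else pi0 x b : R.
have hmu : is_policy mu.
  have [h0 h1] := hpi0.
  split=> [x b|x]; rewrite /mu.
    by case: (inC x); rewrite ?ler0n.
  case: (inC x) => //.
  rewrite (bigD1 (g x)) //= eqxx big1 ?addr0 // => c hc.
  by rewrite (negbTE hc).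
have claim1 : forall t x, 0 < occ M pi0 t x ->
   (exists t' c, inC c /\ 0 < occ M mu t' c) \/ 0 < occ M mu t x.
  elim=> [|t IH] x.
    by move=> h; right.
  move=> /(occ_dec _ _ _ hpi0) [y [b [h1 h2 h3]]].
  case: (IH y h1) => [hh | hy]; first by left.
  case hy' : (inC y); first by left; exists t, y.
  right; apply: (occ_step _ _ _ b _ hmu hy) => //.
  by rewrite /mu hy'.
have [t1 [c [hc hoc]]] : exists t' c, inC c /\ 0 < occ M mu t' c.
  by case: (claim1 t0 sm ht0) => // h; exists t0, sm; split=> //; rewrite /inC.
have [c' [_ hPc]] : exists c', true /\ 0 < P M c (g c) c'.
  by apply: sum_pos; rewrite HP1 ltr01.
have [hc'1 hc'2] := closed c c' hc hPc.
have hoc' : 0 < occ M mu t1.+1 c'.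
  by apply: (occ_step _ _ _ (g c) _ hmu hoc) => //; rewrite /mu hc eqxx ltr01.
have claim2 : forall t x, 0 < occ M mu t x -> x \notin Sbot M ->
    exists n, 0 < alive M mu n x.
  elim=> [|t IH] x.
    by rewrite /= => h hx; move: h; case: eqP => [ex|]; [rewrite ex hs0 in hx|rewrite ltxx].
  move=> /(occ_dec _ _ _ hmu) [y [b [h1 h2 h3]]] hx.
  case hy : (y \in Sbot M).
    exists 0%N => /=.
    have -> : \sum_a mu (s0 M) a * P M (s0 M) a x = rho M x.
      under eq_bigr do rewrite (hterm _ _ _ hs0).
      by rewrite -mulr_suml (proj2 hmu) mul1r.
    by rewrite -(hterm y b x hy).
  have [n hn] := IH y h1 (negbT hy).
  exists n.+1; exact: (alive_step _ _ _ _ _ hmu (negbT hy) hn h2 h3).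
have [N hN] := claim2 _ _ hoc' hc'1.
pose an n := \sum_(x | inC x && (x \notin Sbot M)) alive M mu n x.
have anN : 0 < an N.
  apply: lt_le_trans (term_le_sum c' _ _) => //.
    by rewrite hc'2 hc'1.
  by move=> y _; exact: alive_ge0.
have Pzero : forall x y, inC x -> ~~ (inC y && (y \notin Sbot M)) -> P M x (g x) y = 0.
  move=> x y hx hy; apply/eqP; rewrite eq_le HP0 andbT leNgt; apply/negP => hp.
  have [h1 h2] := closed x y hx hp.
  by move: hy; rewrite h1 h2.
have mono : forall n, an n <= an n.+1.
  move=> n; rewrite /an /=.
  apply: le_trans (_ : \sum_(x | inC x && (x \notin Sbot M))
      \sum_(y | inC y && (y \notin Sbot M)) alive M mu n y * P M y (g y) x <= _).
    rewrite exchange_big /=; apply: ler_sum => y /andP[hy _].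
    rewrite -mulr_sumr.
    have -> : \sum_(i | inC i && (i \notin Sbot M)) P M y (g y) i = 1.
      rewrite -(HP1 y (g y)) [RHS](bigID (fun i => inC i && (i \notin Sbot M))) /=.
      rewrite [X in _ = _ + X]big1 ?addr0 // => i hi; exact: Pzero.
    by rewrite mulr1.
  apply: ler_sum => x _.
  apply: le_trans (sub_sum_le (q := fun y => y \notin Sbot M) _ _).
  - apply: ler_sum => y /andP[hy _]; apply: ler_wpM2l; first exact: alive_ge0.
    rewrite /mu hy (bigD1 (g y)) //= eqxx mul1r lerDl.
    by apply: sumr_ge0 => b /negbTE ->; rewrite mul0r.
  - by move=> y /andP[].
  - move=> y _; apply: mulr_ge0; first exact: alive_ge0.
    by apply: sumr_ge0 => b _; apply: mulr_ge0 => //; case: hmu.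
have anmono : forall n, (N <= n)%N -> an N <= an n.
  move=> n /subnK <-; elim: (n - N)%N => [|k IH]; first by rewrite add0n.
  by apply: le_trans IH (mono _).
apply: (seq_contra N anN _ (hET mu hmu)) => n hn.
apply: le_trans (anmono n hn) _.
apply: sub_sum_le => // y _; exact: alive_ge0.
Qed.

End ELP.

Theorem mainTheorem11 (R : realType) (S A : finType) (M : elp R S A)
  (Qstar Qmax pi mu : S -> A -> R) (s : S) (a : A) :
  is_ELP M ->
  (forall s1 a1, bellman M Qstar s1 a1 = Qstar s1 a1) ->
  is_policy pi ->
  LP_optimal M pi Qmax ->
  greedy Qmax mu ->
  Qmax s a = Qstar s a ->
  forall s' a', Nset M mu s a s' a' ->
    Qmax s' a' = Qstar s' a' /\ Vmax Qmax s' = Vmax Qstar s'.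
Proof.
move=> H hfix _ [hf _] [[hmu0 _] hgr] heq s' a' [hs' hpos].
have [hPP _ _ _ _] := H.
have HP0 : forall s a s', 0 <= P M s a s' by move=> x b y; case: (hPP x b).
have HP1 : forall s a, \sum_s' P M s a s' = 1 by move=> x b; case: (hPP x b).
have [hP hm] := mul_pos (HP0 s a s') (hmu0 s' a') hpos.
have le := @feasible_le _ _ _ M HP0 HP1 a' H _ _ hf hfix.
have Vle : forall x, Vmax Qmax x <= Vmax Qstar x.
  move=> x; have [b /eqP ->] := Vmax_ex _ _ _ a' Qmax x.
  exact: le_trans (le x b) (Vmax_ge _ _ _ a' Qstar x b).
have hsum : \sum_y P M s a y * ((y \notin Sbot M)%:R * (Vmax Qstar y - Vmax Qmax y)) <= 0.
  have h1 := hf s a; rewrite heq -{1}hfix in h1.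
  have -> : \sum_y P M s a y * ((y \notin Sbot M)%:R * (Vmax Qstar y - Vmax Qmax y))
     = bellman M Qstar s a - bellman M Qmax s a.
    by rewrite /bellman -sumrB; apply: eq_bigr => y _; ring.
  lra.
have hterm : P M s a s' * ((s' \notin Sbot M)%:R * (Vmax Qstar s' - Vmax Qmax s')) <= 0.
  apply: le_trans (term_le_sum s' _ _) hsum => // y _.
  apply: mulr_ge0 => //; apply: mulr_ge0; first exact: ler0n.
  by rewrite subr_ge0.
rewrite hs' mul1r pmulr_rle0 // in hterm.
have hV : Vmax Qmax s' = Vmax Qstar s'.
  by apply/eqP; rewrite eq_le Vle /=; lra.
have hg := hgr s' a' hm.
split=> //.
apply/eqP; rewrite eq_le le /=.
by rewrite hg hV; exact: Vmax_ge.
Qed.
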